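(* Let $\mathcal{V}$ be a finite vocabulary, $N\ge1$, $\mathcal{S}$ a finite corpus of sequences in $\mathcal{V}^N$, and $q$ a language model on $\mathcal{V}^N$. Let $b\ge0$ and suppose $g:\bigcup_{j=1}^N\mathcal{V}^j\to[0,1]$ has generalized training advantage $\hat\beta(g)\ge b$. Define a distribution $q'$ through its conditional probabilities $$q'(x_j\mid x_1,\dots,x_{j-1})=q(x_j\mid x_1,\dots,x_{j-1})\,e^{-bg(x_1,\dots,x_j)}/Z_{q'}(x_1,\dots,x_{j-1}),$$ where $Z_{q'}(x_1,\dots,x_{j-1})=\sum_{\tilde{x}_j\in\mathcal{V}}q(\tilde{x}_j\mid x_1,\dots,x_{j-1})e^{-bg(x_1,\dots,x_{j-1},\tilde{x}_j)}$. Then $$\hat{L}(q';\mathcal{S})\le\hat{L}(q;\mathcal{S})-Nb^2/2.$$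
   Context: A language model $q$ on $\mathcal{V}^N$ is given by conditionals $q(x_j\mid x_1,\dots,x_{j-1})$, $j=1,\dots,N$ (for $j=1$ this is $q(x_1)$), with $q(x_1,\dots,x_N)=\prod_{j=1}^Nq(x_j\mid x_1,\dots,x_{j-1})$. The log-loss is $\hat{L}(q;\mathcal{S})=-\hat{\mathrm{E}}_{x\sim\mathcal{S}}[\log q(x)]$, where $\hat{\mathrm{E}}_{x\sim\mathcal{S}}$ is the empirical average over sequences in $\mathcal{S}$. The generalized training advantage of $g$ (with respect to $\mathcal{S}$ and $q$) is $$\hat{\beta}(g)=\frac{1}{N}\sum_{j=1}^{N}\hat{\mathrm{E}}_{x\sim\mathcal{S}}\Bigl[\mathrm{E}_{w\sim q(\cdot\mid x_1,\dots,x_{j-1})}g(x_1,\dots,x_{j-1},w)-g(x_1,\dots,x_j)\Bigr].$$ *)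

(* Defs.v *)
From HB Require Import structures.
From mathcomp Require Import all_boot all_order all_algebra.
From mathcomp Require Import all_classical all_reals.
From mathcomp.analysis Require Import ereal sequences exp.
Set Implicit Arguments. Unset Strict Implicit. Unset Printing Implicit Defensive.
Import Order.TTheory GRing.Theory Num.Theory.
Local Open Scope ring_scope.

(* A language model on V^N is represented by its conditionals
   q s v = q(v | s), where s : seq V is the prefix (x_1,...,x_{j-1}). *)

Definition is_lm (R : realType) (V : finType) (N : nat) (q : seq V -> V -> R) :=
  forall s : seq V, (size s < N)%N ->
    (forall v, 0 <= q s v) /\ \sum_(v : V) q s v = 1.

(* q(x) = prod_j q(x_j | x_1..x_{j-1}); index i : 'I_N is j-1. *)
Definition seqprob (R : realType) (V : finType) (N : nat)
  (q : seq V -> V -> R) (x : N.-tuple V) : R :=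
  \prod_(i < N) q (take i x) (tnth x i).

Definition neglog (R : realType) (p : R) : \bar R :=
  if 0 < p then (- ln p)%:E else +oo%E.

Definition logloss (R : realType) (V : finType) (N : nat)
  (q : seq V -> V -> R) (S : seq (N.-tuple V)) : \bar R :=
  ((\sum_(x <- S) neglog (seqprob q x)) * ((size S)%:R^-1)%:E)%E.

Definition advantage (R : realType) (V : finType) (N : nat)
  (q : seq V -> V -> R) (S : seq (N.-tuple V)) (g : seq V -> R) : R :=
  (N%:R)^-1 * ((\sum_(x <- S) \sum_(i < N)
     ((\sum_(w : V) q (take i x) w * g (rcons (take i x) w))
       - g (take i.+1 x))) / (size S)%:R).

Definition Zq (R : realType) (V : finType) (q : seq V -> V -> R)
  (g : seq V -> R) (b : R) (s : seq V) : R :=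
  \sum_(w : V) q s w * expR (- (b * g (rcons s w))).

Definition tilt (R : realType) (V : finType) (q : seq V -> V -> R)
  (g : seq V -> R) (b : R) : seq V -> V -> R :=
  fun s v => q s v * expR (- (b * g (rcons s v))) / Zq q g b s.

(* Main.v *)
Require Import Defs.
From HB Require Import structures.
From mathcomp Require Import all_boot all_order all_algebra.
From mathcomp Require Import all_classical all_reals.
From mathcomp.analysis Require Import ereal sequences exp derive topology normedtype.
From mathcomp Require Import ring lra.
Import Order.TTheory GRing.Theory Num.Theory.
Local Open Scope ring_scope.
Import numFieldNormedType.Exports.

Lemma expN_le (R : realType) (t : R) : 0 <= t -> expR (- t) <= 1 - t + t ^+ 2 / 2.
Proof.
move=> t0.
pose h := fun x : R => expR x * (1 - x + x ^+ 2 / 2).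
have hd : forall x : R, is_derive x (1:R) h (expR x * (x ^+ 2 / 2)).
  move=> x; rewrite /h.
  apply: is_derive_eq.
  rewrite !scaler0; rewrite -[LHS]/(expR x * ((0 + 1) * -1 + (0 + 2^-1 * (x * 1 + x * 1))) + (1 - x + x ^+ 2 / 2) * expR x).
  by field.
have := @MVT_segment R h (fun x => expR x * (x ^+ 2 / 2)) 0 t t0 (fun x _ => hd x).
case.
  apply: continuous_subspaceT => x.
  apply: differentiable_continuous; apply/derivable1_diffP.
  have hx := hd x; exact: ex_derive.
move=> c _ Hc.
have : h 0 <= h t.
  rewrite -subr_ge0 Hc mulr_ge0 // ?subr0 // mulr_ge0 ?expR_ge0 // divr_ge0 ?sqr_ge0 //.
rewrite /h expR0 mul1r expr0n /= subr0 mul0r addr0 => H.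
rewrite expRN -(@ler_pM2l _ (expR t)) ?expR_gt0 // mulfV ?expR_eq0 //.
Qed.

Section Main.
Variables (R : realType) (V : finType) (N : nat) (q : seq V -> V -> R)
  (g : seq V -> R) (b : R).
Hypothesis qlm : is_lm N q.
Hypothesis gb : forall s : seq V, (0 < size s <= N)%N -> 0 <= g s <= 1.
Hypothesis b0 : 0 <= b.

Let Z s := Zq q g b s.
Let m s := \sum_(w : V) q s w * g (rcons s w).

Lemma gbr s w : (size s < N)%N -> 0 <= g (rcons s w) <= 1.
Proof. by move=> hs; apply: gb; rewrite size_rcons ltnS /=. Qed.

Lemma Zpos s : (size s < N)%N -> 0 < Z s.
Proof.
move=> hs; have [q0 q1] := qlm s hs.
apply: (@lt_le_trans _ _ (\sum_(w : V) q s w * expR (- b))).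
  by rewrite -big_distrl /= q1 mul1r expR_gt0.
apply: ler_sum => w _; apply: ler_wpM2l => //; rewrite ler_expR lerN2.
have /andP[g0 g1] := gbr s w hs.
by rewrite -[leRHS]mulr1 ler_wpM2l.
Qed.

Lemma lnZ s : (size s < N)%N -> ln (Z s) <= - (b * m s) + b ^+ 2 / 2.
Proof.
move=> hs; have [q0 q1] := qlm s hs.
have H : Z s <= 1 - b * m s + b ^+ 2 / 2.
  apply: (@le_trans _ _ (\sum_(w : V) (q s w * (1 + b ^+ 2 / 2) - b * (q s w * g (rcons s w))))).
    apply: ler_sum => w _.
    have /andP[g0 g1] := gbr s w hs.
    have e := @expN_le _ _ (mulr_ge0 b0 g0).
    have : (b * g (rcons s w)) ^+ 2 <= b ^+ 2.
      rewrite exprMn -[leRHS]mulr1 ler_wpM2l ?sqr_ge0 //.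
      by rewrite -(expr1n _ 2) ler_pXn2r // nnegrE.
    move=> hb2.
    have : expR (- (b * g (rcons s w))) <= 1 - b * g (rcons s w) + b ^+ 2 / 2.
      by apply: (le_trans e); rewrite lerD2l ler_pM2r.
    move=> e2.
    rewrite (_ : q s w * (1 + b ^+ 2 / 2) - b * (q s w * g (rcons s w)) =
       q s w * (1 - b * g (rcons s w) + b ^+ 2 / 2)); last by ring.
    by rewrite ler_wpM2l.
  rewrite sumrB -big_distrl -big_distrr /= q1 mul1r /m; lra.
have Zp := Zpos s hs.
have := expR_ge1Dx (ln (Z s)); rewrite lnK ?posrE // => h1.
lra.
Qed.

Definition D (x : N.-tuple V) : R :=
  \sum_(i < N) (b * g (take i.+1 x) + ln (Z (take i x))).

Lemma rcons_take (x : N.-tuple V) (i : 'I_N) :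
  rcons (take i x) (tnth x i) = take i.+1 x.
Proof.
have x0 := tnth x i.
by rewrite (take_nth x0) ?size_tuple // (tnth_nth x0).
Qed.

Lemma size_take_lt (x : N.-tuple V) (i : 'I_N) : (size (take i x) < N)%N.
Proof. by rewrite size_take size_tuple ltn_ord. Qed.

Lemma seqprob_tilt (x : N.-tuple V) :
  seqprob (tilt q g b) x = seqprob q x * expR (- D x).
Proof.
rewrite /seqprob /D -sumrN expR_sum -big_split /=.
apply: eq_bigr => i _.
rewrite /tilt rcons_take opprD expRD (expRN (ln _)) lnK ?posrE; last first.
  exact: Zpos (size_take_lt x i).
by rewrite /Z mulrA.
Qed.

Lemma neglog_tilt (x : N.-tuple V) :
  (neglog (seqprob (tilt q g b) x) <= neglog (seqprob q x) + (D x)%:E)%E.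
Proof.
rewrite seqprob_tilt /neglog.
have [hp|hp] := ltrP 0 (seqprob q x).
  rewrite mulr_gt0 ?expR_gt0 // -EFinD lee_fin lnM ?posrE ?expR_gt0 // expRK.
  lra.
by rewrite addye // leey.
Qed.

Lemma sum_neglog (S : seq (N.-tuple V)) :
  (\sum_(x <- S) neglog (seqprob (tilt q g b) x) <=
   \sum_(x <- S) neglog (seqprob q x) + (\sum_(x <- S) D x)%:E)%E.
Proof.
elim: S => [|x S IH]; first by rewrite !big_nil adde0.
rewrite !big_cons EFinD addeACA; exact: leeD (neglog_tilt x) IH.
Qed.

Lemma D_le (x : N.-tuple V) :
  D x <= - b * (\sum_(i < N) ((\sum_(w : V) q (take i x) w * g (rcons (take i x) w))
       - g (take i.+1 x))) + N%:R * (b ^+ 2 / 2).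
Proof.
apply: (@le_trans _ _ (\sum_(i < N) (- b * ((\sum_(w : V) q (take i x) w * g (rcons (take i x) w))
       - g (take i.+1 x)) + b ^+ 2 / 2))).
  apply: ler_sum => i _.
  have := @lnZ _ (size_take_lt x i); rewrite /m => h; lra.
by rewrite big_split /= -mulr_sumr sumr_const card_ord mulr_natl.
Qed.

Lemma sumD_le (S : seq (N.-tuple V)) :
  \sum_(x <- S) D x <= - b * (\sum_(x <- S) \sum_(i < N)
     ((\sum_(w : V) q (take i x) w * g (rcons (take i x) w))
       - g (take i.+1 x))) + (size S)%:R * (N%:R * (b ^+ 2 / 2)).
Proof.
elim: S => [|x S IH]; first by rewrite !big_nil mulr0 mul0r addr0.
rewrite !big_cons /= -addn1 natrD; have := D_le x; lra.
Qed.

End Main.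

Theorem lemma3 (R : realType) (V : finType) (N : nat) (S : seq (N.-tuple V))
  (q : seq V -> V -> R) (g : seq V -> R) (b : R) :
  (0 < N)%N ->
  is_lm N q ->
  (forall s : seq V, (0 < size s <= N)%N -> 0 <= g s <= 1) ->
  0 <= b ->
  b <= advantage q S g ->
  (logloss (tilt q g b) S <= logloss q S - (N%:R * b ^+ 2 / 2)%:E)%E.
Proof.
move=> N0 qlm gb b0 hadv.
rewrite /logloss.
rewrite /advantage in hadv.
set A := \sum_(x <- S) _ in hadv.
have hS := @sumD_le _ _ _ q g b qlm gb b0 S.
rewrite -/A in hS.
have hN := @sum_neglog _ _ _ q g b qlm gb b0 S.
move: hS hN.
set SD := \sum_(x <- S) _.
move=> hS hN.
have [Sn|Sn] := posnP (size S).
  rewrite Sn invr0 mulr0 mulr0 in hadv.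
  have -> : b = 0 by lra.
  move/size0nil: Sn => ->.
  by rewrite !big_nil !mul0e expr0n /= mulr0 mul0r sube0.
move: hS hadv; set n := size S => hS hadv.
have n0 : (0 : R) < n%:R by rewrite ltr0n.
have NR : (0 : R) < N%:R by rewrite ltr0n.
have hA : N%:R * n%:R * b <= A.
  move: hadv; rewrite ler_pdivlMl // ler_pdivlMr // => h.
  by rewrite -mulrA (mulrC n%:R) mulrA.
have hD : SD <= - (n%:R * (N%:R * b ^+ 2 / 2)).
  apply: (le_trans hS).
  have : b * (N%:R * n%:R * b) <= b * A by rewrite ler_wpM2l.
  move=> h.
  have e : b * (N%:R * n%:R * b) = n%:R * (N%:R * b ^+ 2) by ring.
  rewrite e in h.
  have e2 : n%:R * (N%:R * (b ^+ 2 / 2)) = n%:R * (N%:R * b ^+ 2) / 2 by ring.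
  have e3 : n%:R * (N%:R * b ^+ 2 / 2) = n%:R * (N%:R * b ^+ 2) / 2 by ring.
  rewrite e2 e3; lra.
apply: (le_trans (lee_wpmul2r _ hN)).
  by rewrite lee_fin invr_ge0 ler0n.
rewrite muleDl ?fin_num_adde_defl // -EFinM.
apply: leeD2l; rewrite lee_fin.
rewrite ler_pdivrMr // mulrC.
have e4 : - (N%:R * b ^+ 2 / 2) * n%:R = - (n%:R * (N%:R * b ^+ 2 / 2)) by ring.
by rewrite mulrC e4.
Qed.
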